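(* For every $\epsilon>0$ there is a constant $C(\epsilon)>0$ such that $R_3(n)\le C(\epsilon)\, n^{1/3+\epsilon}$ for all positive integers $n$.
   Context: For a positive integer $n$, $R_3(n)$ denotes the number of ordered triples $(x,y,z)$ of positive integers with $n = xyz + x + y + z$. *)

(* Defs.v *)
From Stdlib Require Import Reals Arith List.
Import ListNotations.

Definition is_R3_sol (n x y z : nat) : bool :=
  (1 <=? x) && (1 <=? y) && (1 <=? z) && Nat.eqb (x*y*z + x + y + z) n.

(* R_3(n): number of ordered triples of positive integers (x,y,z) with
   n = xyz + x + y + z.  Any solution has x,y,z <= n, so it suffices
   to count triples in [0,n]^3. *)
Definition R3 (n : nat) : nat :=
  length (filter (fun t : nat * nat * nat =>
             let '(x, y, z) := t in is_R3_sol n x y z)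
    (list_prod (list_prod (seq 0 (S n)) (seq 0 (S n))) (seq 0 (S n)))).

(* Main.v *)
Require Import Defs.
From Stdlib Require Import Reals Lra Lia PeanoNat.
From mathcomp Require ssreflect ssrfun ssrbool eqtype ssrnat seq div prime bigop zify.

Module Aux.
From mathcomp Require Import all_boot zify.
Set Implicit Arguments. Unset Strict Implicit.

Definition dv m := size (divisors m).

Lemma dv_mul x y : 0 < x -> 0 < y -> dv (x * y) <= dv x * dv y.
Proof.
move=> x0 y0; rewrite /dv -(size_allpairs muln).
apply: uniq_leq_size; first exact: divisors_uniq.
move=> d; rewrite -dvdn_divisors ?muln_gt0 ?x0 // => dxy.
have d0 : 0 < d by apply: dvdn_gt0 dxy; rewrite muln_gt0 x0.
have g0 : 0 < gcdn d x by rewrite gcdn_gt0 d0.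
have gd : gcdn d x %| d by apply: dvdn_gcdl.
apply/allpairsP; exists (gcdn d x, d %/ gcdn d x) => /=; split.
- by rewrite -dvdn_divisors // dvdn_gcdr.
- rewrite -dvdn_divisors // dvdn_divLR //.
  have : d %| gcdn (x * y) (d * y) by rewrite dvdn_gcd dxy dvdn_mulr.
  by rewrite [y * _]mulnC muln_gcdl gcdnC.
- by rewrite /= mulnC divnK.
Qed.

Lemma dv_pexp p a : prime p -> dv (p ^ a) <= a.+1.
Proof.
move=> pp; rewrite /dv.
apply: (@leq_trans (size (map (expn p) (iota 0 a.+1)))); last by rewrite size_map size_iota.
apply: uniq_leq_size; first exact: divisors_uniq.
move=> d; rewrite -dvdn_divisors ?expn_gt0 ?prime_gt0 //.
case/(dvdn_pfactor _ _ pp) => i ia ->.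
by apply: map_f; rewrite mem_iota.
Qed.

Lemma leq_expr m n e : m <= n -> m ^ e <= n ^ e.
Proof. by move=> h; elim: e => // e ih; rewrite !expnS leq_mul. Qed.

Lemma pow_small k a p : 0 < k -> 1 < p -> a.+1 ^ k <= k ^ k * p ^ a.
Proof.
move=> k0 p1; set q := a %/ k.
have h1 : a.+1 <= k * q.+1.
  have := divn_eq a k; have := ltn_pmod a k0; rewrite -/q; lia.
have h2 : q.+1 <= 2 ^ q by apply: ltn_expl.
have h3 : 2 ^ (q * k) <= p ^ a.
  apply: (@leq_trans (2 ^ a)); first by rewrite leq_exp2l // leq_divM.
  by apply: leq_expr.
apply: (@leq_trans ((k * q.+1) ^ k)); first by apply: leq_expr.
rewrite expnMn leq_mul2l; apply/orP; right.
apply: leq_trans h3; rewrite expnM; by apply: leq_expr.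
Qed.

Lemma pow_big k a p : 2 ^ k <= p -> a.+1 ^ k <= p ^ a.
Proof.
move=> hp.
apply: (@leq_trans ((2 ^ a) ^ k)); first by apply: leq_expr; apply: ltn_expl.
by rewrite -expnM mulnC expnM; apply: leq_expr.
Qed.

Lemma dv1 : dv 1 = 1. Proof. by []. Qed.

Lemma dv_bound_gen k : 0 < k -> forall m, 0 < m -> forall j,
  (forall q, prime q -> q %| m -> j <= q) ->
  dv m ^ k <= (k ^ k) ^ (2 ^ k - j) * m.
Proof.
move=> k0 m; elim/ltn_ind: m => m IH m0 j hj.
have c1 : 0 < k ^ k by rewrite expn_gt0 k0.
case: (ltnP 1 m) => m1; last first.
  have -> : m = 1 by lia.
  by rewrite dv1 exp1n muln1 expn_gt0 c1.
set p := pdiv m.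
have pp : prime p by apply: pdiv_prime.
have pm : p %| m by apply: pdiv_dvd.
have jp : j <= p by apply: hj.
have [m' cop def] := pfactor_coprime pp m0.
set a := logn p m in def.
have a0 : 0 < a by rewrite logn_gt0 mem_primes pp m0 pm.
have m'0 : 0 < m' by move: m0; rewrite def muln_gt0 => /andP[].
have pa2 : 1 < p ^ a.
  have := prime_gt1 pp => p1.
  by rewrite -(expn0 p) ltn_exp2l.
have m'm : m' < m.
  rewrite def -{1}(muln1 m') ltn_mul2l m'0 //.
have hj' : forall q, prime q -> q %| m' -> p.+1 <= q.
  move=> q qp qm'.
  have qm : q %| m by rewrite def dvdn_mulr.
  have pq : p <= q by apply: pdiv_min_dvd => //; apply: prime_gt1.
  rewrite ltn_neqAle pq andbT; apply/eqP => epq.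
  by move: cop; rewrite prime_coprime // epq qm'.
have ih := IH m' m'm m'0 p.+1 hj'.
have hd : dv m ^ k <= dv m' ^ k * a.+1 ^ k.
  rewrite -expnMn; apply: leq_expr.
  rewrite def; apply: (leq_trans (dv_mul m'0 _)); first by rewrite expn_gt0 prime_gt0.
  by rewrite leq_mul2l dv_pexp // orbT.
apply: leq_trans hd _.
case: (ltnP p (2 ^ k)) => hpB.
- apply: (@leq_trans ((k ^ k) ^ (2 ^ k - p.+1) * m' * (k ^ k * p ^ a))).
    by apply: leq_mul => //; apply: pow_small => //; apply: prime_gt1.
  have e : (k ^ k) ^ (2 ^ k - p.+1) * m' * (k ^ k * p ^ a)
         = (k ^ k) ^ (2 ^ k - p.+1).+1 * m.
    rewrite def expnS; set X := (k ^ k) ^ _; set c := k ^ k; set P := p ^ a.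
    clearbody X c P. nia.
  rewrite e leq_mul2r; apply/orP; right.
  apply: leq_pexp2l => //; lia.
- apply: (@leq_trans ((k ^ k) ^ (2 ^ k - p.+1) * m' * p ^ a)).
    by apply: leq_mul => //; apply: pow_big.
  have -> : 2 ^ k - p.+1 = 0 by lia.
  rewrite expn0 mul1n -def -{1}(mul1n m) leq_mul2r; apply/orP; right.
  by rewrite expn_gt0 c1.
Qed.

Lemma dv_bound k m : 0 < k -> 0 < m -> dv m ^ k <= (k ^ k) ^ (2 ^ k) * m.
Proof.
move=> k0 m0; have := dv_bound_gen k0 m0 (j:=0) (fun _ _ _ => leq0n _).
by rewrite subn0.
Qed.
Lemma length_size T (l : list T) : length l = size l.
Proof. by elim: l => //= x l ->. Qed.
Lemma filterE T f (l : list T) : List.filter f l = filter f l.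
Proof. by elim: l => //= x l ->. Qed.
Lemma count_sum T (a : pred T) s : count a s = \sum_(x <- s) a x.
Proof. by elim: s => [|x s ih]; rewrite ?big_nil ?big_cons //= ih. Qed.
Lemma count_prod A B (P : pred (A * B)) (l1 : list A) (l2 : list B) :
  count P (List.list_prod l1 l2) = \sum_(a <- l1) count (fun b => P (a, b)) l2.
Proof.
elim: l1 => [|a l1 ih]; first by rewrite big_nil.
rewrite big_cons /= -ih.
have -> : (List.map [eta pair a] l2 ++ List.list_prod l1 l2)%list
   = (map (pair a) l2 ++ List.list_prod l1 l2) by [].
rewrite count_cat count_map; done.
Qed.
Lemma sum_prod A B (F : A * B -> nat) (l1 : list A) (l2 : list B) :
  \sum_(p <- List.list_prod l1 l2) F p = \sum_(a <- l1) \sum_(b <- l2) F (a, b).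
Proof.
elim: l1 => [|a l1 ih]; first by rewrite !big_nil.
rewrite big_cons /= -ih.
have -> : (List.map [eta pair a] l2 ++ List.list_prod l1 l2)%list
   = (map (pair a) l2 ++ List.list_prod l1 l2) by [].
by rewrite big_cat big_map.
Qed.
Lemma seq_iota a b : List.seq a b = iota a b.
Proof. by elim: b a => //= b ih a; rewrite ih. Qed.

Lemma R3E n : R3 n = \sum_(x <- iota 0 n.+1) \sum_(y <- iota 0 n.+1)
   \sum_(z <- iota 0 n.+1) is_R3_sol n x y z.
Proof.
rewrite /R3 length_size filterE size_filter seq_iota count_prod.
rewrite sum_prod; apply: eq_bigr => x _; apply: eq_bigr => y _.
by rewrite count_sum.
Qed.

Lemma lebE a b : Nat.leb a b = (a <= b).
Proof. by apply/idP/idP => [/Nat.leb_le/leP|/leP/Nat.leb_le]. Qed.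
Lemma eqbE a b : Nat.eqb a b = (a == b).
Proof. by apply/idP/idP => [/Nat.eqb_eq/eqP|/eqP/Nat.eqb_eq]. Qed.

Lemma solE n x y z : is_R3_sol n x y z =
  [&& 0 < x, 0 < y, 0 < z & x * y * z + x + y + z == n].
Proof. by rewrite /is_R3_sol !lebE eqbE -!andbA. Qed.

Lemma sol_yxz n x y z : is_R3_sol n x y z = is_R3_sol n y x z.
Proof.
rewrite !solE; apply/idP/idP => /and4P[h1 h2 h3 /eqP h4];
  apply/and4P; split => //; apply/eqP; lia.
Qed.
Lemma sol_zxy n x y z : is_R3_sol n x y z = is_R3_sol n z x y.
Proof.
rewrite !solE; apply/idP/idP => /and4P[h1 h2 h3 /eqP h4];
  apply/and4P; split => //; apply/eqP; lia.
Qed.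

Lemma count_le1 (T : eqType) (P : pred T) (s : seq T) :
  uniq s -> (forall a b, P a -> P b -> a = b) -> count P s <= 1.
Proof.
move=> us h; elim: s us => [|a s ih] //= /andP[nas us].
case Pa: (P a) => /=; last by rewrite add0n ih.
suff -> : count P s = 0 by [].
apply/eqP; rewrite -leqn0 leqNgt -has_count; apply/hasP => -[b bs Pb].
by move: nas; rewrite (h _ _ Pa Pb) bs.
Qed.
Lemma key n a b c : a * b * c + a + b + c = n ->
  (a * b + 1) * (a * c + 1) = a * n + 1 - a * a.
Proof. move=> <-; nia. Qed.

Lemma G_bound n a : 0 < a ->
  \sum_(b <- iota 0 n.+1) \sum_(c <- iota 0 n.+1) is_R3_sol n a b c
  <= dv (a * n + 1 - a * a).
Proof.
move=> a0; set M := a * n + 1 - a * a.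
apply: (@leq_trans (\sum_(b <- iota 0 n.+1) (a * b + 1 \in divisors M))).
  apply: leq_sum => b _; rewrite -count_sum.
  case hb: (a * b + 1 \in divisors M).
  - apply: count_le1; first exact: iota_uniq.
    move=> c1 c2; rewrite !solE => /and4P[_ _ _ /eqP e1] /and4P[_ _ _ /eqP e2].
    have : (a * b + 1) * c1 = (a * b + 1) * c2 by lia.
    by move/eqP; rewrite eqn_pmul2l ?addn1 // => /eqP.
  - suff -> : count (is_R3_sol n a b) (iota 0 n.+1) = 0 by [].
    apply/eqP; rewrite -leqn0 leqNgt -has_count; apply/negP => /hasP[c _].
    rewrite solE => /and4P[_ _ _ /eqP e].
    have hM := key e.
    have M0 : 0 < M by rewrite /M -hM muln_gt0 !addn1.
    move: hb; rewrite -dvdn_divisors // /M -hM dvdn_mulr //.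
rewrite -count_sum -size_filter /dv.
rewrite -(size_map (fun b => a * b + 1)).
apply: uniq_leq_size.
  rewrite map_inj_uniq ?filter_uniq ?iota_uniq //.
  by move=> b1 b2 /eqP; rewrite eqn_add2r eqn_pmul2l // => /eqP.
by move=> d /mapP[b]; rewrite mem_filter => /andP[h _] ->.
Qed.

Lemma min_cube a b c : a <= b -> a <= c -> a ^ 3 <= a * b * c.
Proof. by move=> ab ac; rewrite -[3]/(2.+1) expnSr -[2]/(1.+1) expnSr expn1 leq_mul // leq_mul. Qed.

Lemma cube_or n x y z : is_R3_sol n x y z ->
  (x ^ 3 <= n) || (y ^ 3 <= n) || (z ^ 3 <= n).
Proof.
rewrite solE => /and4P[x0 y0 z0 /eqP e].
have hx : x * y * z <= n by lia.
case: (leqP x y) => xy; case: (leqP x z) => xz; case: (leqP y z) => yz.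
- by rewrite (leq_trans (min_cube xy xz) hx).
- by rewrite (leq_trans (min_cube xy xz) hx).
- lia.
- have h1 : z <= x by lia. have h2 : z <= y by lia.
  by rewrite (leq_trans (min_cube h1 h2)) ?orbT //; rewrite mulnC mulnA; lia.
- have h1 : y <= x by lia.
  by rewrite (leq_trans (min_cube h1 yz)) ?orbT //; rewrite [y * x]mulnC; lia.
- lia.
- have h1 : y <= x by lia.
  by rewrite (leq_trans (min_cube h1 yz)) ?orbT //; rewrite [y * x]mulnC; lia.
- have h1 : z <= x by lia. have h2 : z <= y by lia.
  by rewrite (leq_trans (min_cube h1 h2)) ?orbT //; rewrite mulnC mulnA; lia.
Qed.

Definition G n a := \sum_(b <- iota 0 n.+1) \sum_(c <- iota 0 n.+1) is_R3_sol n a b c.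

Lemma T_bound n : R3 n <= 3 * \sum_(a <- iota 0 n.+1) (a ^ 3 <= n) * G n a.
Proof.
rewrite R3E.
set L := iota 0 n.+1.
have e1 : \sum_(x <- L) \sum_(y <- L) \sum_(z <- L) (x ^ 3 <= n) * is_R3_sol n x y z
   = \sum_(a <- L) (a ^ 3 <= n) * G n a.
  apply: eq_bigr => x _; rewrite /G big_distrr; apply: eq_bigr => y _.
  by rewrite big_distrr.
have e2 : \sum_(x <- L) \sum_(y <- L) \sum_(z <- L) (y ^ 3 <= n) * is_R3_sol n x y z
   = \sum_(a <- L) (a ^ 3 <= n) * G n a.
  rewrite exchange_big; apply: eq_bigr => y _; rewrite /G big_distrr; apply: eq_bigr => x _.
  by rewrite big_distrr; apply: eq_bigr => z _; rewrite sol_yxz.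
have e3 : \sum_(x <- L) \sum_(y <- L) \sum_(z <- L) (z ^ 3 <= n) * is_R3_sol n x y z
   = \sum_(a <- L) (a ^ 3 <= n) * G n a.
  rewrite (eq_bigr (fun x => \sum_(z <- L) \sum_(y <- L) (z ^ 3 <= n) * is_R3_sol n x y z));
    last by move=> x _; rewrite exchange_big.
  rewrite exchange_big; apply: eq_bigr => z _; rewrite /G big_distrr; apply: eq_bigr => x _.
  by rewrite big_distrr; apply: eq_bigr => y _; rewrite sol_zxy.
rewrite mulSn mul2n -addnn -{1}e1 -{1}e2 -e3 -!big_split /=.
apply: leq_sum => x _; rewrite -!big_split /=.
apply: leq_sum => y _; rewrite -!big_split /=.
apply: leq_sum => z _.
case h: (is_R3_sol n x y z); rewrite ?muln0 //.
have := cube_or h.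
by case: (x ^ 3 <= n); case: (y ^ 3 <= n); case: (z ^ 3 <= n).
Qed.

Lemma G0 n : G n 0 = 0.
Proof.
by rewrite /G big1_seq // => b _; rewrite big1_seq // => c _; rewrite solE.
Qed.

Lemma max_lemma (P : pred nat) (f : nat -> nat) B k s : 0 < k ->
  (forall a, a \in s -> P a -> f a ^ k <= B) ->
  exists D, D ^ k <= B /\ \sum_(a <- s) P a * f a <= count P s * D.
Proof.
move=> k0; elim: s => [|a s ih] h.
  by exists 0; rewrite big_nil exp0n.
have [D' [hD' hs]] : exists D, D ^ k <= B /\ \sum_(a <- s) P a * f a <= count P s * D.
  by apply: ih => b bs; apply: h; rewrite in_cons bs orbT.
case Pa: (P a).
- case: (leqP (f a) D') => fd.
    exists D'; split => //; rewrite big_cons /= Pa mul1n add1n mulSn.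
    exact: leq_add.
  exists (f a); split; first by apply: h; rewrite ?in_cons ?eqxx.
  rewrite big_cons /= Pa mul1n add1n mulSn.
  apply: leq_add => //; apply: leq_trans hs _; rewrite leq_mul2l (ltnW fd) orbT //.
- exists D'; split => //; by rewrite big_cons /= Pa mul0n add0n add0n.
Qed.

Lemma count_cube n N :
  count (fun a => (0 < a) && (a ^ 3 <= n)) (iota 0 N) ^ 3 <= n /\
  count (fun a => (0 < a) && (a ^ 3 <= n)) (iota 0 N) <= N.-1.
Proof.
elim: N => [|N [ih1 ih2]] //.
have -> : iota 0 N.+1 = iota 0 N ++ [:: N] by rewrite -addn1 iotaD.
rewrite count_cat /= addn0.
set c := count _ _ in ih1 ih2 *.
case: (ltnP 0 N) => N0 /=; last first.
  have -> : N = 0 by lia.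
  by rewrite /= addn0; split => //; move: ih1 ih2; rewrite /c; lia.
case h: (N ^ 3 <= n) => /=.
- split; last by lia.
  apply: leq_trans h; apply: leq_expr; rewrite addn1; lia.
- by rewrite addn0; split => //; lia.
Qed.

Lemma nat_main k n : 0 < k -> 0 < n ->
  R3 n ^ (3 * k) <= 27 ^ k * (((k ^ k) ^ (2 ^ k)) ^ 3 * n ^ (k + 6)).
Proof.
move=> k0 n0.
set K := (k ^ k) ^ (2 ^ k).
set L := iota 0 n.+1.
set P := fun a => (0 < a) && (a ^ 3 <= n).
have h2 : \sum_(a <- L) (a ^ 3 <= n) * G n a
        <= \sum_(a <- L) P a * dv (a * n + 1 - a * a).
  apply: leq_sum => a _; rewrite /P /=.
  case: (posnP a) => [->|a0]; first by rewrite G0 muln0.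
  by case: (a ^ 3 <= n) => /=; rewrite ?mul1n ?mul0n // (G_bound n a0).
have hyp : forall a, a \in L -> P a -> dv (a * n + 1 - a * a) ^ k <= K * n ^ 2.
  move=> a; rewrite /L mem_iota /P => /andP[_ an0] /andP[a0 _].
  have an : a <= n by lia.
  have h1 : a * a <= a * n by rewrite leq_mul2l an orbT.
  have h3 : a * n <= n * n by rewrite leq_mul2r an orbT.
  have h4 : 1 <= a * a by rewrite muln_gt0 a0.
  apply: leq_trans (dv_bound k0 _) _; first lia.
  rewrite leq_mul2l; apply/orP; right; rewrite -[2]/(1.+1) expnSr expn1; lia.
have [D [hD hs]] := @max_lemma P (fun a => dv (a * n + 1 - a * a)) (K * n ^ 2) k L k0 hyp.
have [hc _] := count_cube n n.+1.
set c := count _ _ in hc hs.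
have hR : R3 n <= 3 * (c * D).
  apply: leq_trans (T_bound n) _; rewrite leq_mul2l; apply/orP; right.
  exact: leq_trans h2 hs.
apply: (@leq_trans ((3 * (c * D)) ^ (3 * k))); first exact: leq_expr.
rewrite !expnMn.
have -> : 3 ^ (3 * k) = 27 ^ k by rewrite expnM.
rewrite -mulnA leq_mul2l; apply/orP; right.
have e1 : c ^ (3 * k) <= n ^ k by rewrite expnM; apply: leq_expr.
have e2 : D ^ (3 * k) <= K ^ 3 * n ^ 6.
  rewrite mulnC expnM; apply: (leq_trans (leq_expr 3 hD)).
  by rewrite expnMn -expnM.
apply: leq_trans (leq_mul e1 e2) _.
rewrite (expnD n k 6) mulnCA [X in _ <= X]mulnA; exact: leqnn.
Qed.

Definition Bk k := 27 ^ k * ((k ^ k) ^ (2 ^ k)) ^ 3.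

Lemma INR_expn m e : INR (m ^ e) = pow (INR m) e.
Proof. elim: e => // e ih; by rewrite expnS mult_INR ih. Qed.

Lemma Bk_pos k : Rlt 0 (INR (Bk k)).
Proof.
apply: lt_0_INR; apply/ltP; rewrite /Bk muln_gt0 !expn_gt0 /=.
by case: k.
Qed.

Lemma real_main k n : lt 0 k -> lt 0 n ->
  Rle (pow (INR (R3 n)) (3 * k)) (Rmult (INR (Bk k)) (pow (INR n) (k + 6))).
Proof.
move=> /ltP k0 /ltP n0.
have h : R3 n ^ (3 * k) <= Bk k * n ^ (k + 6) by rewrite /Bk -mulnA; exact: nat_main.
move/leP/le_INR: h.
by rewrite (INR_expn (R3 n)) mult_INR (INR_expn n).
Qed.

End Aux.

Open Scope R_scope.

Lemma ln_le' x y : 0 < x -> x <= y -> ln x <= ln y.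
Proof.
intros hx hxy; destruct (Rle_lt_or_eq_dec _ _ hxy) as [h|h].
- left; apply ln_increasing; auto.
- subst; lra.
Qed.

Lemma exp_le' x y : x <= y -> exp x <= exp y.
Proof.
intros hxy; destruct (Rle_lt_or_eq_dec _ _ hxy) as [h|h].
- left; apply exp_increasing; auto.
- subst; lra.
Qed.

Theorem theorem2 :
  forall eps : R, 0 < eps ->
  exists C : R, 0 < C /\
    forall n : nat, (1 <= n)%nat ->
      INR (R3 n) <= C * Rpower (INR n) (1/3 + eps).
Proof.
intros eps Heps.
destruct (INR_unbounded (2 / eps)) as [k0 Hk0].
set (k := S k0).
assert (HK : 2 / eps < INR k) by (unfold k; rewrite S_INR; lra).
assert (Kpos : 0 < INR k) by (apply lt_0_INR; unfold k; lia).
assert (Keps : 2 <= INR k * eps).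
{ apply Rmult_lt_compat_r with (r := eps) in HK; [|lra].
  unfold Rdiv in HK; rewrite Rmult_assoc, Rinv_l in HK; lra. }
set (lb := ln (INR (Aux.Bk k))).
exists (exp (lb / (3 * INR k))); split; [apply exp_pos|].
intros n Hn.
assert (Rp : 0 < Rpower (INR n) (1/3 + eps)) by (unfold Rpower; apply exp_pos).
destruct (Nat.eq_dec (R3 n) 0) as [E|E].
{ rewrite E; simpl; apply Rmult_le_pos; left; [apply exp_pos| exact Rp]. }
assert (Apos : 0 < INR (R3 n)) by (apply lt_0_INR; lia).
assert (npos : 0 < INR n) by (apply lt_0_INR; lia).
assert (lnn : 0 <= ln (INR n)).
{ rewrite <- ln_1; apply ln_le'; [lra|]. apply (le_INR 1); exact Hn. }
assert (H := @Aux.real_main k n ltac:(unfold k; lia) ltac:(lia)).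
apply ln_le' in H; [| apply pow_lt; exact Apos].
rewrite ln_pow in H by exact Apos.
rewrite ln_mult in H by (try apply Aux.Bk_pos; apply pow_lt; exact npos).
rewrite ln_pow in H by exact npos.
rewrite mult_INR, plus_INR in H. fold lb in H.
replace (INR 3) with 3 in H by (simpl; lra).
replace (INR 6) with 6 in H by (simpl; lra).
rewrite <- (exp_ln (INR (R3 n))) by exact Apos.
unfold Rpower; rewrite <- exp_plus.
apply exp_le'.
set (la := ln (INR (R3 n))) in *.
set (ln_ := ln (INR n)) in *.
set (K := INR k) in *.
assert (Hm : 6 * ln_ <= 3 * (K * eps) * ln_) by nra.
apply Rmult_le_reg_l with (r := 3 * K); [lra|].
replace (3 * K * (lb / (3 * K) + (1 / 3 + eps) * ln_))
  with (lb + K * ln_ + 3 * (K * eps) * ln_) by (field; lra).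
nra.
Qed.
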